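(* Let $n\ge1$ and let $G$ be a canonical weighted voting game on players $\{1,\dots,n\}$ whose set $W_{\min,G}$ of minimal winning coalitions is nonempty. Then there exist a coalition $C\in W_{\min,G}$ and a canonical weighted voting game $G'$ on players $\{1,\dots,n\}$ whose set of minimal winning coalitions is exactly $W_{\min,G}\setminus\{C\}$.
   Context: A simple game on $N=\{1,\dots,n\}$ is a function $v:2^N\to\{0,1\}$ (the all-losing game is allowed); $S$ is winning if $v(S)=1$. A minimal winning coalition is a winning coalition all of whose sets $S\setminus\{i\}$, $i\in S$, are losing. A weighted voting game is a simple game for which there exist $q\ge0$, $w_1,\dots,w_n\ge0$ with $v(S)=1\iff\sum_{i\in S}w_i\ge q$. Write $i\succeq j$ if $v(S\cup\{i\})\ge v(S\cup\{j\})$ for all $S\subseteq N\setminus\{i,j\}$. A canonical weighted voting game is a weighted voting game with $1\succeq2\succeq\cdots\succeq n$. *)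

(* Defs.v *)
From mathcomp Require Import all_boot all_order all_algebra.
From mathcomp Require Import Rstruct.
From Stdlib Require Import Reals.
Set Implicit Arguments. Unset Strict Implicit. Unset Printing Implicit Defensive.
Import Order.TTheory GRing.Theory Num.Theory.
Local Open Scope ring_scope.

(* Players {1,...,n} are represented by 'I_n = {0,...,n-1}; player i+1 of the
   paper is the ordinal i.  A simple game is any map from coalitions to bool. *)
Definition simple_game (n : nat) := {set 'I_n} -> bool.

Definition minimal_winning n (v : simple_game n) (S : {set 'I_n}) : bool :=
  v S && [forall i in S, ~~ v (S :\ i)].

Definition Wmin n (v : simple_game n) : {set {set 'I_n}} :=
  [set S | minimal_winning v S].

Definition weighted n (v : simple_game n) : Prop :=
  exists (q : R) (w : 'I_n -> R),
    0 <= q /\ (forall i, 0 <= w i) /\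
    forall S : {set 'I_n}, v S = (q <= \sum_(i in S) w i).

Definition desir n (v : simple_game n) (i j : 'I_n) : Prop :=
  forall S : {set 'I_n}, i \notin S -> j \notin S ->
    v (j |: S) -> v (i |: S).

Definition canonical_wvg n (v : simple_game n) : Prop :=
  weighted v /\
  forall i j : 'I_n, (nat_of_ord i).+1 = j -> desir v i j.

(* Main.v *)
Require Import Defs.
From mathcomp Require Import all_boot all_order all_algebra all_fingroup.
From mathcomp Require Import Rstruct lra.
From Stdlib Require Rdefinitions.
Local Notation R := Rdefinitions.R.
Set Implicit Arguments. Unset Strict Implicit. Unset Printing Implicit Defensive.
Import Order.TTheory GRing.Theory Num.Theory.
Local Open Scope ring_scope.


Lemma ex_max_fin (T : finType) (P : pred T) (f : T -> R) x0 :
  P x0 -> exists x, P x /\ forall y, P y -> f y <= f x.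
Proof.
move=> Px0.
have : forall s : seq T, (exists y, y \in s) -> exists x, x \in s /\ forall y, y \in s -> f y <= f x.
  elim=> [[y]//|a s IH _].
  case: s IH => [_|b s IH].
    by exists a; split; rewrite ?inE ?eqxx // => y; rewrite inE => /eqP ->.
  have [|x [xs Hx]] := IH; first by exists b; rewrite inE eqxx.
  case: (lerP (f a) (f x)) => Ha.
  + exists x; split; first by rewrite inE xs orbT.
    by move=> y; rewrite inE => /orP [/eqP ->|/Hx].
  + exists a; split; first by rewrite inE eqxx.
    move=> y; rewrite inE => /orP [/eqP ->//|/Hx Hy]. exact: (le_trans Hy (ltW Ha)).
move=> /(_ (enum P)) [|x [xs Hx]]; first by exists x0; rewrite mem_enum.
exists x; split; first by rewrite mem_enum in xs.
by move=> y Py; apply: Hx; rewrite mem_enum.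
Qed.

Lemma gap_seq (s : seq R) : exists g, 0 < g /\ forall x, x \in s -> 0 < x -> g <= x.
Proof.
elim: s => [|a s [g [g0 Hg]]]; first by exists 1; split.
case: (ltrP 0 a) => Ha.
- exists (Order.min g a); split; first by rewrite lt_min g0 Ha.
  move=> x; rewrite inE => /orP [/eqP ->|xs x0]; first by rewrite ge_min lexx orbT.
  by rewrite ge_min (Hg x xs x0).
- exists g; split => // x; rewrite inE => /orP [/eqP -> H|xs]; last exact: Hg.
  by move: (lt_le_trans H Ha); rewrite ltxx.
Qed.

Lemma gap_fin (T : finType) (f : T -> R) : exists g, 0 < g /\ forall t, 0 < f t -> g <= f t.
Proof.
have [g [g0 Hg]] := gap_seq [seq f t | t <- enum T].
exists g; split => // t Ht; apply: Hg => //; apply: map_f; by rewrite mem_enum.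
Qed.
Section Gen.
Variable n : nat.
Implicit Types (S T : {set 'I_n}) (W : 'I_n -> R).

Definition wsum W S := \sum_(i in S) W i.

Lemma wsumU1 W x S : x \notin S -> wsum W (x |: S) = W x + wsum W S.
Proof. by move=> H; rewrite /wsum big_setU1. Qed.

Lemma wsumD1 W x S : x \in S -> wsum W S = W x + wsum W (S :\ x).
Proof. by move=> H; rewrite /wsum (big_setD1 x). Qed.

Lemma wsum_sub W S T : (forall i, 0 <= W i) -> S \subset T -> wsum W S <= wsum W T.
Proof.
move=> W0 ST; rewrite /wsum (big_setID (A := T) S) /= (setIidPr ST).
by rewrite lerDl sumr_ge0.
Qed.

Variable v : simple_game n.

Lemma antichain (M : {set {set 'I_n}}) :
  (forall S T, S \subset T -> v S -> v T) ->
  forall T C, T \in Wmin v -> C \in Wmin v -> T \subset C -> T = C.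
Proof.
move=> mono T C; rewrite !inE => /andP [vT _] /andP [vC /forallP HC] TC.
apply/eqP; rewrite eqEsubset TC /=; apply/negP => CT.
have [j jC jT] : exists2 j, j \in C & j \notin T.
  by apply/subsetPn; apply/negP.
have := HC j; rewrite jC /= => /negP; apply; apply: (mono T) => //.
by apply/subsetP => x xT; rewrite !inE (subsetP TC x xT) andbT; apply/eqP => E; rewrite -E xT in jT.
Qed.

Lemma Wmin_char (v' : simple_game n) (M : {set {set 'I_n}}) :
  (forall S T, S \subset T -> v S -> v T) ->
  (forall S, v' S = [exists T in M, T \subset S]) -> M \subset Wmin v -> Wmin v' = M.
Proof.
move=> mono Hv' MW; apply/setP => S; rewrite inE /minimal_winning Hv'.
apply/idP/idP.
- case/andP => /exists_inP [T TM TS] /forall_inP H.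
  suff -> : S = T by [].
  apply/eqP; rewrite eq_sym eqEsubset TS /=; apply/subsetP => i iS.
  apply/negPn/negP => iT; have := H i iS; rewrite Hv' => /exists_inP; apply.
  exists T => //; apply/subsetP => x xT; rewrite !inE (subsetP TS x xT) andbT.
  by apply/eqP => E; rewrite -E xT in iT.
- move=> SM; apply/andP; split; first by apply/exists_inP; exists S.
  apply/forall_inP => i iS; rewrite Hv'; apply/exists_inP => [[T TM TS]].
  have TS' : T \subset S by apply: (subset_trans TS); apply/subsetP => x; rewrite !inE => /andP[].
  have E := antichain M mono (subsetP MW T TM) (subsetP MW S SM) TS'.
  by move: TS; rewrite E => /subsetP /(_ i iS); rewrite !inE eqxx.
Qed.

Lemma contains_min :
  (forall S T, S \subset T -> v S -> v T) ->
  forall S, v S -> exists T, T \in Wmin v /\ T \subset S.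
Proof.
move=> mono S; elim: #|S| {-2}S (leqnn #|S|) => [|k IH] S' Hk vS.
- exists S'; split => //; rewrite inE /minimal_winning vS /=.
  by apply/forall_inP => i iS; move: Hk; rewrite leqn0 cards_eq0 => /eqP E; rewrite E inE in iS.
- case: (boolP (minimal_winning v S')) => Hm; first by exists S'; rewrite inE.
  move: Hm; rewrite /minimal_winning vS /= negb_forall_in => /exists_inP [i iS /negPn vi].
  have [|T [TW TS]] := IH (S' :\ i) _ vi.
    by rewrite -ltnS (leq_trans _ Hk) // (cardsD1 i S') iS.
  exists T; split => //; apply: (subset_trans TS); exact: subsetDl.
Qed.

End Gen.

Section StepA.
Variable n : nat.
Implicit Types (S T : {set 'I_n}) (W : 'I_n -> R).

Lemma sum2 (F : 'I_n -> R) i j : i != j ->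
  \sum_k F k = F i + F j + \sum_(k | (k != i) && (k != j)) F k.
Proof.
move=> ij; rewrite (bigD1 i) //= (bigD1 j) /=; last by rewrite eq_sym.
rewrite addrA; congr (_ + _); apply: eq_bigl => k; by rewrite andbC.
Qed.

Lemma sum2S (F : 'I_n -> R) S i j : i != j -> i \in S -> j \in S ->
  \sum_(k in S) F k = F i + F j + \sum_(k in S :\ i :\ j) F k.
Proof.
move=> ij iS jS; rewrite (big_setD1 i) //= (big_setD1 j) /=; last by rewrite !inE eq_sym ij.
by rewrite addrA.
Qed.

Lemma swap_valid (v : simple_game n) q W i j : i != j -> desir v i j -> W i < W j ->
  (forall S, v S = (q <= wsum W S)) ->
  forall S, v S = (q <= \sum_(k in S) W (tperm i j k)).
Proof.
move=> ij dij Wij Hv S.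
have fix_k : forall k, k != i -> k != j -> tperm i j k = k.
  by move=> k ki kj; rewrite tpermD // eq_sym.
have key : forall X : {set 'I_n}, i \notin X -> j \notin X -> v (i |: X) = v (j |: X).
  move=> X iR jR; apply/idP/idP; last exact: dij.
  rewrite !Hv !wsumU1 // => H; apply: (le_trans H); rewrite lerD2r; exact: ltW.
case: (boolP (i \in S)) => iS; case: (boolP (j \in S)) => jS.
- rewrite Hv /wsum (sum2S _ ij iS jS) (sum2S _ ij iS jS) tpermL tpermR (addrC (W j)).
  congr (_ <= _ + _); apply: eq_bigr => k; rewrite !inE => /and3P [kj ki _]; by rewrite fix_k.
- have Ri : i \notin S :\ i by rewrite !inE eqxx.
  have Rj : j \notin S :\ i by rewrite !inE negb_and jS orbT.
  have ES : S = i |: (S :\ i) by rewrite setD1K.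
  have E : \sum_(k in S) W (tperm i j k) = wsum W (j |: (S :\ i)).
    rewrite (big_setD1 i) //= tpermL wsumU1 //; congr (_ + _); apply: eq_bigr => k.
    rewrite !inE => /andP [ki kS]; rewrite fix_k //; apply/eqP => E; move: kS; by rewrite E (negbTE jS).
  by rewrite E -Hv {1}ES key.
- have Ri : i \notin S :\ j by rewrite !inE negb_and iS orbT.
  have Rj : j \notin S :\ j by rewrite !inE eqxx.
  have ES : S = j |: (S :\ j) by rewrite setD1K.
  have E : \sum_(k in S) W (tperm i j k) = wsum W (i |: (S :\ j)).
    rewrite (big_setD1 j) //= tpermR wsumU1 //; congr (_ + _); apply: eq_bigr => k.
    rewrite !inE => /andP [kj kS]; rewrite fix_k //; apply/eqP => E; move: kS; by rewrite E (negbTE iS).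
  by rewrite E -Hv {1}ES key.
- rewrite Hv /wsum; congr (_ <= _); apply: eq_bigr => k kS; rewrite fix_k //.
  + by apply/eqP => E; move: kS; rewrite E (negbTE iS).
  + by apply/eqP => E; move: kS; rewrite E (negbTE jS).
Qed.
End StepA.

Section StepA2.
Variable n : nat.
Implicit Types (S T : {set 'I_n}) (W : 'I_n -> R).

Lemma consec_mono W : (forall i j : 'I_n, i.+1 = j -> W j <= W i) ->
  forall i j : 'I_n, (nat_of_ord i <= nat_of_ord j)%N -> W j <= W i.
Proof.
move=> Hc i j ij.
have : exists m, (i + m)%N = j by exists (j - i)%N; rewrite subnKC.
case=> m; elim: m j {ij} => [|m IH] j Hm.
  by have -> : j = i by apply: val_inj; rewrite /= -Hm addn0.
have jp : (j.-1 < n)%N by apply: leq_ltn_trans (leq_pred j) (ltn_ord j).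
have E : (Ordinal jp).+1 = j by rewrite /= -Hm addnS.
apply: le_trans (Hc _ _ E) (IH _ _); by rewrite /= -Hm addnS.
Qed.

Lemma mono_weights (v : simple_game n) : canonical_wvg v ->
  exists q W, 0 <= q /\ (forall i, 0 <= W i) /\
    (forall i j : 'I_n, (nat_of_ord i <= nat_of_ord j)%N -> W j <= W i) /\ forall S, v S = (q <= wsum W S).
Proof.
case=> [[q [w [q0 [w0 Hw]]]] Hdes].
pose valid (s : {perm 'I_n}) := [forall S : {set 'I_n}, v S == (q <= \sum_(i in S) w (s i))].
pose obj (s : {perm 'I_n}) := \sum_(i : 'I_n) w (s i) * (n - i)%:R.
have v1 : valid 1%g.
  apply/forallP => S; rewrite Hw; apply/eqP; congr (_ <= _); apply: eq_bigr => i _; by rewrite perm1.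
have [s [vs smax]] := ex_max_fin obj v1.
have Hs : forall S, v S = (q <= wsum (fun i => w (s i)) S).
  by move=> S; apply/eqP; exact: (forallP vs S).
exists q, (fun i => w (s i)); split => //; split => //; split => //.
apply: consec_mono => i j Eij; rewrite leNgt; apply/negP => Wij.
have ij : i != j by apply/eqP => E; move: Eij; rewrite E => H; exact: (n_Sn _ (esym H)).
have Hs' := swap_valid ij (Hdes _ _ Eij) Wij Hs.
have vs' : valid (tperm i j * s)%g.
  by apply/forallP => S; rewrite Hs'; apply/eqP; congr (_ <= _); apply: eq_bigr => k _; rewrite permM.
have := smax _ vs'; rewrite /obj (sum2 _ ij) (sum2 _ ij) !permM tpermL tpermR.
rewrite (eq_bigr (fun k => w (s k) * (n - k)%:R)); last first.
  by move=> k /andP [ki kj]; rewrite permM tpermD // eq_sym.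
have Ec : (n - i)%:R = (n - j)%:R + 1 :> R.
  by rewrite -Eij -(subnSK (ltn_ord i)) -addn1 natrD.
rewrite Ec !mulrDr !mulr1 => H; move: Wij => /= Wij.
lra.
Qed.
End StepA2.

Lemma desirW n (v : simple_game n) q (W : 'I_n -> R) i j :
  (forall S, v S = (q <= wsum W S)) -> W j <= W i -> desir v i j.
Proof.
move=> Hv Wji S iS jS; rewrite !Hv !wsumU1 // => H; apply: le_trans H _; by rewrite lerD2r.
Qed.

Section Main.
Variable n : nat.
Variable v : simple_game n.
Variable q : R.
Variable W : 'I_n -> R.
Hypothesis q0 : 0 <= q.
Hypothesis W0 : forall i, 0 <= W i.
Hypothesis Wmono : forall i j : 'I_n, (nat_of_ord i <= nat_of_ord j)%N -> W j <= W i.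
Hypothesis Hv : forall S, v S = (q <= wsum W S).
Implicit Types (S T X : {set 'I_n}).

Lemma vmono S T : S \subset T -> v S -> v T.
Proof. move=> ST; rewrite !Hv => H; apply: le_trans H _; exact: wsum_sub. Qed.

Lemma inWmin_v T : T \in Wmin v -> v T.
Proof. by rewrite inE => /andP []. Qed.

Lemma case_empty : v set0 ->
  exists C : {set 'I_n}, C \in Wmin v /\
    exists v' : simple_game n, canonical_wvg v' /\ Wmin v' = Wmin v :\ C.
Proof.
move=> v0; exists set0; split.
  by rewrite inE /minimal_winning v0 /=; apply/forall_inP => i; rewrite inE.
exists (fun _ => false); split.
- split.
  + exists 1, (fun _ => 0); split; first exact: ler01.
    split=> // S; by rewrite big1 // ler10.
  + by move=> i j _ S.
- apply/setP => S; rewrite !inE /minimal_winning /=; apply/esym/negbTE.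
  apply/negP => /andP [Sn /andP [vS /forall_inP H]].
  have [i iS] := set0Pn _ Sn.
  have := H i iS; rewrite (vmono (sub0set _) v0) //.
Qed.

Lemma case_nonempty : ~~ v set0 -> Wmin v != set0 ->
  exists C : {set 'I_n}, C \in Wmin v /\
    exists v' : simple_game n, canonical_wvg v' /\ Wmin v' = Wmin v :\ C.
Proof.
move=> nv0 Wne.
have mono := vmono.
have [T0 T0W] := set0Pn _ Wne.
have [i0 i0T] : exists i, i \in T0.
  apply/set0Pn/negP => /eqP E; move: (inWmin_v T0W); rewrite E; exact/negP.
pose Pp i := [exists T in Wmin v, i \in T].
have [p Ppp pmax] : exists2 p, Pp p & forall i, Pp i -> (nat_of_ord i <= nat_of_ord p)%N.
  have H0 : Pp i0 by apply/exists_inP; exists T0.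
  case: (arg_maxnP (fun i : 'I_n => nat_of_ord i) H0) => p Hp Hm; by exists p.
pose Pset := [set i : 'I_n | (nat_of_ord i <= nat_of_ord p)%N].
have pP : p \in Pset by rewrite inE.
have Wmin_sub : forall T, T \in Wmin v -> T \subset Pset.
  move=> T TW; apply/subsetP => i iT; rewrite inE; apply: pmax; apply/exists_inP; by exists T.
have vP : forall S, v S = v (S :&: Pset).
  move=> S; apply/idP/idP; last by apply: mono; exact: subsetIl.
  move=> vS; have [T [TW TS]] := contains_min mono vS.
  apply: (mono T); last exact: inWmin_v.
  by rewrite subsetI TS Wmin_sub.
have Wp : 0 < W p.
  case/exists_inP: Ppp => T TW pT.
  move: (TW); rewrite inE => /andP [vT /forall_inP /(_ p pT)].
  rewrite Hv (wsumD1 W pT) in vT; rewrite Hv -ltNge => H; clear -vT H; lra.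
pose U := [set S | [&& v S, p \in S, ~~ v (S :\ p) & S \subset Pset]].
have [Tp TpW pTp] : exists2 T, T \in Wmin v & p \in T by case/exists_inP: Ppp => T; exists T.
have TpU : Tp \in U.
  move: (TpW); rewrite !inE => /andP [vT /forall_inP H].
  by rewrite vT pTp H //= Wmin_sub.
have [C1 [C1U C1min]] := ex_max_fin (fun S => - wsum W S) (P := mem U) TpU.
have C1U' : C1 \in U by [].
pose PC S := (S \in U) && (wsum W S == wsum W C1).
have PC1 : PC C1 by rewrite /PC C1U' eqxx.
pose idx S := (\sum_(i in S) nat_of_ord i)%N.
case: (arg_maxnP idx PC1) => C /andP [CU /eqP CC1] Cmax.
have Cmin : forall S, S \in U -> wsum W C <= wsum W S.
  by move=> S SU; rewrite CC1 -lerN2; exact: C1min.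
have minU : forall S, S \in U -> wsum W S = wsum W C -> S \in Wmin v.
  move=> S SU SC; move: (SU); rewrite inE => /and4P [vS pS nvSp SPs].
  rewrite inE /minimal_winning vS /=; apply/forall_inP => j jS.
  case: (eqVneq j p) => [->//|jp]; apply/negP => vSj.
  have SjU : S :\ j \in U.
    rewrite inE vSj !inE eq_sym jp pS /=; apply/andP; split.
      apply/negP => H; move/negP: nvSp; apply; apply: mono H.
      by apply/subsetP => x; rewrite !inE => /and3P [-> _ ->].
    by apply: subset_trans SPs; exact: subsetDl.
  have := Cmin _ SjU; rewrite -SC (wsumD1 W jS).
  have : W p <= W j by apply: Wmono; move: (subsetP SPs j jS); rewrite inE.
  move=> h1 h2; clear -h1 h2 Wp; lra.
have CW : C \in Wmin v by apply: minU.
have [CU1 CU2 CU3 CU4] : [/\ v C, p \in C, ~~ v (C :\ p) & C \subset Pset].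
  by move: CU; rewrite inE => /and4P [].
have [g1 [g1p Hg1]] := gap_fin (fun ST : {set 'I_n} * {set 'I_n} => wsum W ST.2 - wsum W ST.1).
have [g2 [g2p Hg2]] := gap_fin (fun S : {set 'I_n} => q - wsum W S).
pose gam := Order.min g1 g2.
have gp : 0 < gam by rewrite lt_min g1p g2p.
have G1 : forall S T, wsum W S < wsum W T -> wsum W S + gam <= wsum W T.
  move=> S T H; have := Hg1 (S, T); rewrite /= subr_gt0 => /(_ H).
  have : gam <= g1 by rewrite ge_min lexx.
  move=> a b; clear -a b; lra.
have G2 : forall S, wsum W S < q -> wsum W S + gam <= q.
  move=> S H; have := Hg2 S; rewrite /= subr_gt0 => /(_ H).
  have : gam <= g2 by rewrite ge_min lexx orbT.
  move=> a b; clear -a b; lra.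
pose e := wsum W C - q.
have e0 : 0 <= e by move: CU1; rewrite Hv /e subr_ge0.
have He : e + gam <= W p.
  have := G2 (C :\ p); move: CU3; rewrite Hv -ltNge => H /(_ H).
  rewrite /e (wsumD1 W CU2); move=> a; clear -a; lra.
pose eta := gam / (n.+1)%:R.
have etap : 0 < eta by rewrite /eta divr_gt0 // ltr0n.
have etak : forall k, (k <= n)%N -> eta * k%:R < gam.
  move=> k kn; rewrite /eta mulrAC ltr_pdivrMr ?ltr0n //.
  by rewrite ltr_pM2l // ltr_nat ltnS.
have etag : eta <= gam.
  have n1 : (1 <= n)%N by apply: leq_ltn_trans (leq0n _) (ltn_ord p).
  by have := etak 1%N n1; rewrite mulr1 => H; apply: ltW.
pose W' := fun i : 'I_n => (if (nat_of_ord i <= nat_of_ord p)%N then W i else 0)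
   + (if ((nat_of_ord i <= nat_of_ord p)%N) && (i \notin C) then eta else 0)
   - (if i == p then e + eta else 0).
have sumW' : forall S, wsum W' S = wsum W (S :&: Pset) + eta * #|S :&: Pset :\: C|%:R
     - (if p \in S then e + eta else 0).
  move=> S; rewrite /wsum /W' sumrB big_split /=.
  congr (_ + _ - _).
  - rewrite big_mkcond [RHS]big_mkcond; apply: eq_bigr => i _; rewrite !inE.
    by case: (i \in S); case: (nat_of_ord i <= nat_of_ord p)%N.
  - rewrite mulr_natr -sumr_const big_mkcond [RHS]big_mkcond; apply: eq_bigr => i _; rewrite !inE.
    by case: (i \in S); case: (nat_of_ord i <= nat_of_ord p)%N; case: (i \in C).
  - rewrite -big_mkcondr; case: (boolP (p \in S)) => pS.
    + by rewrite (eq_bigl (fun i => i == p)) ?big_pred1_eq // => i; case: (eqVneq i p) => [->|]; rewrite ?pS ?andbF.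
    + by rewrite big_pred0 // => i; case: (eqVneq i p) => [->|]; rewrite ?(negbTE pS) ?andbF.
pose M := Wmin v :\ C.
have MW : M \subset Wmin v by exact: subsetDl.
have Hchar : forall S, (q <= wsum W' S) = [exists T in M, T \subset S].
  move=> S; set SP := S :&: Pset.
  have -> : [exists T in M, T \subset S] = [exists T in M, T \subset SP].
    apply/exists_inP/exists_inP => [[T TM TS]|[T TM TS]]; exists T => //.
    - by rewrite subsetI TS Wmin_sub // (subsetP MW).
    - exact: subset_trans TS (subsetIl _ _).
  rewrite sumW' -/SP.
  have -> : (p \in S) = (p \in SP) by rewrite inE pP andbT.
  have kn : (#|SP :\: C| <= n)%N by rewrite -[X in (_ <= X)%N]card_ord max_card.
  have ek := etak _ kn.
  have k0 : 0 <= eta * #|SP :\: C|%:R by rewrite mulr_ge0 ?ler0n // ltW.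
  have notC : forall T, T \in Wmin v -> p \notin T -> T \in M.
    move=> T TW pT; rewrite in_setD1 TW andbT; apply/eqP => E; by rewrite E CU2 in pT.
  case: (boolP (v SP)) => vSP; last first.
    have Wl : wsum W SP < q by move: vSP; rewrite Hv -ltNge.
    have := G2 _ Wl => G.
    have -> : [exists T in M, T \subset SP] = false.
      apply/negbTE/negP => /exists_inP [T TM TS]; apply: (negP vSP).
      exact: (mono T _ TS (inWmin_v (subsetP MW _ TM))).
    apply/negbTE; rewrite -ltNge; case: ifP => _; clear -G ek e0 etap; lra.
  case: (boolP (p \in SP)) => pS; last first.
    have [T [TW TS]] := contains_min mono vSP.
    have -> : [exists T in M, T \subset SP].
      apply/exists_inP; exists T => //; apply: notC => //.
      by apply/negP => pT; move: (subsetP TS p pT); rewrite (negbTE pS).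
    move: vSP; rewrite Hv => H; apply/idP; clear -H k0; lra.
  case: (boolP (v (SP :\ p))) => vSPp.
    have [T [TW TS]] := contains_min mono vSPp.
    have -> : [exists T in M, T \subset SP].
      apply/exists_inP; exists T.
        by apply: notC => //; apply/negP => pT; move: (subsetP TS p pT); rewrite !inE eqxx.
      exact: subset_trans TS (subsetDl _ _).
    move: vSPp; rewrite Hv (wsumD1 W pS) => H; apply/idP; clear -H k0 He etag; lra.
  have SPU : SP \in U by rewrite inE vSP pS vSPp subsetIr.
  have CSP := Cmin _ SPU.
  case: (eqVneq SP C) => [ESP|NSP].
    have -> : [exists T in M, T \subset SP] = false.
      apply/negbTE/negP => /exists_inP [T TM TS]; move: (TM); rewrite ESP in TS.
      rewrite !inE (antichain M mono (subsetP MW _ TM) CW TS) eqxx //.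
    rewrite ESP setDv cards0 mulr0 addr0; apply/negbTE; rewrite -ltNge /e; clear -etap; lra.
  case: (ltrP (wsum W C) (wsum W SP)) => HC.
    have := G1 _ _ HC => G.
    have -> : [exists T in M, T \subset SP].
      have [T [TW TS]] := contains_min mono vSP.
      case: (eqVneq T C) => [ET|NT]; last first.
        by apply/exists_inP; exists T => //; rewrite in_setD1 NT TW.
      have : ~~ (SP \subset C).
        apply/negP => SPC; move/eqP: NSP; apply; apply/eqP; rewrite eqEsubset SPC /=; by rewrite -ET.
      case/subsetPn => i iSP iC.
      have ip : i != p by apply/eqP => E; rewrite E CU2 in iC.
      have ilp : (nat_of_ord i <= nat_of_ord p)%N by move: iSP; rewrite !inE => /andP [_].
      have iCp : i \notin C :\ p by rewrite !inE negb_and iC orbT.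
      pose X := i |: (C :\ p).
      have vX : v X.
        rewrite Hv /X wsumU1 //; move: CU1; rewrite Hv (wsumD1 W CU2).
        have := Wmono ilp; move=> a b; clear -a b; lra.
      have [T' [T'W T'X]] := contains_min mono vX.
      apply/exists_inP; exists T'.
        apply: notC => //; apply/negP => pT; move: (subsetP T'X p pT).
        by rewrite !inE eqxx eq_sym (negbTE ip).
      apply: subset_trans T'X _; apply/subsetP => x; rewrite !inE.
      case/orP => [/eqP ->|/andP [_ xC]]; first by move: iSP; rewrite !inE.
      move: (subsetP TS x); rewrite ET => /(_ xC).
      by rewrite !inE.
    apply/idP; rewrite /e; clear -G k0 etag; lra.
  have SPC : wsum W SP = wsum W C by apply/eqP; rewrite eq_le HC CSP.
  have SPW := minU _ SPU SPC.
  have -> : [exists T in M, T \subset SP] by apply/exists_inP; exists SP; rewrite ?subxx // in_setD1 NSP SPW.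
  have : ~~ (SP \subset C).
    apply/negP => SPC'; move/eqP: NSP; apply; exact: (antichain M mono SPW CW SPC').
  case/subsetPn => i iSP iC.
  have k1 : 1 <= #|SP :\: C|%:R :> R.
    rewrite ler1n card_gt0; apply/set0Pn; exists i; by rewrite inE iC.
  have : eta <= eta * #|SP :\: C|%:R by rewrite ler_peMr // ltW.
  move=> H; apply/idP; rewrite SPC /e; clear -H; lra.
have W'0 : forall i, 0 <= W' i.
  move=> i; rewrite /W'; case: (eqVneq i p) => [->|ip].
    rewrite leqnn CU2 /=; have := W0 p; move=> a; clear -a He etag; lra.
  rewrite subr0; case: (nat_of_ord i <= nat_of_ord p)%N; case: (i \in C) => /=; have := W0 i; move=> a; clear -a etap; lra.
have W'mono : forall i j : 'I_n, (nat_of_ord i).+1 = j -> W' j <= W' i.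
  move=> i j Eij.
  have ij : (nat_of_ord i <= nat_of_ord j)%N by move: (leqnSn i); rewrite Eij.
  case: (boolP (nat_of_ord j <= nat_of_ord p)%N) => jp; last first.
    have njp : j != p by apply/eqP => E; rewrite E leqnn in jp.
    by rewrite {1}/W' (negbTE jp) (negbTE njp) /= subr0 addr0.
  have ilp : (nat_of_ord i < nat_of_ord p)%N by move: jp; rewrite -Eij.
  have ip : i != p by apply/eqP => E; rewrite E ltnn in ilp.
  have Wi : W' i = W i + (if i \notin C then eta else 0).
    by rewrite /W' (ltnW ilp) (negbTE ip) subr0.
  rewrite Wi; case: (eqVneq j p) => [Ejp|njp].
    rewrite /W' Ejp leqnn CU2 eqxx /=.
    have := Wmono (ltnW ilp); case: ifP => _ a; clear -a e0 etap; lra.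
  have jlp : (nat_of_ord j < nat_of_ord p)%N.
    rewrite ltn_neqAle jp andbT; apply/negP => /eqP E; move/negP: njp; apply.
    by apply/eqP; apply: val_inj.
  have Wj : W' j = W j + (if j \notin C then eta else 0).
    by rewrite /W' (ltnW jlp) (negbTE njp) subr0.
  rewrite Wj; have Wji := Wmono ij.
  case: (ltrP (W j) (W i)) => Wl.
    have := G1 [set j] [set i]; rewrite /wsum !big_set1 => /(_ Wl) G.
    case: ifP => _; case: ifP => _; clear -G etag etap; lra.
  have Wij : W i = W j by apply/eqP; rewrite eq_le Wl Wji.
  have iCjC : i \in C -> j \in C.
    move=> iC; apply/negPn/negP => jC.
    pose X := j |: (C :\ i).
    have jCi : j \notin C :\ i by rewrite !inE negb_and jC orbT.
    have iCi : i \in C :\ p by rewrite !inE ip.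
    have wX : wsum W X = wsum W C by rewrite /X wsumU1 // (wsumD1 W iC) Wij.
    have XU : X \in U.
      rewrite inE -[v X]/(v X) Hv wX -Hv CU1 /=.
      rewrite !inE (eq_sym p j) (negbTE njp) (eq_sym p i) ip CU2 /=.
      apply/andP; split.
        have -> : X :\ p = j |: ((C :\ p) :\ i).
          apply/setP => x; rewrite !inE; case: (eqVneq x j) => [->|_] /=; first by rewrite njp.
          by rewrite andbCA.
        rewrite Hv wsumU1; last by rewrite !inE (negbTE jC) !andbF.
        move: CU3; rewrite Hv (wsumD1 W iCi) Wij; by [].
      apply/subsetP => x; rewrite !inE; case/orP => [/eqP ->|/andP [_ xC]].
        exact: ltnW.
      by have := subsetP CU4 x xC; rewrite inE.
    have := Cmax X; rewrite /PC XU wX CC1 eqxx => /(_ isT).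
    rewrite /idx /X big_setU1 //= (big_setD1 i iC) /= -Eij.
    by rewrite addSn ltnNge => /negP; apply; apply: leqnn.
  case: (boolP (i \in C)) => iC /=.
    by rewrite (iCjC iC) /= !addr0 Wij lexx.
  case: ifP => _; clear -Wij etap; lra.
have WM : Wmin (fun S => q <= wsum W' S) = M by exact: (Wmin_char mono Hchar MW).
exists C; split => //; exists (fun S => q <= wsum W' S); split => //.
split; first by exists q, W'.
move=> i j Eij; apply: (desirW (W := W')) => //; exact: W'mono.
Qed.


End Main.

Theorem lemma4 (n : nat) (v : simple_game n) :
  (1 <= n)%N -> canonical_wvg v -> Wmin v != set0 ->
  exists C : {set 'I_n}, C \in Wmin v /\
    exists v' : simple_game n, canonical_wvg v' /\ Wmin v' = Wmin v :\ C.
Proof.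
move=> _ Hc Wne.
have [q [W [q0 [W0 [Wm Hv]]]]] := mono_weights Hc.
case: (boolP (v set0)) => v0.
- exact: (case_empty W0 Hv v0).
- exact: (case_nonempty q0 W0 Wm Hv v0 Wne).
Qed.
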